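(* Let $n\ge 6$ be even and consider the $[\![n,n-2,2]\!]$ code. Let $U$ be the product of the gates obtained from every tuple $(a,b,c)\in\{2,n\}\times\{3,n\}\times\{4,n\}$, namely $\mathrm{CCZ}_{a,b,c}$ when $a,b,c$ are distinct, $\mathrm{CZ}$ on the two distinct qubits when exactly two are distinct, and $Z_n$ for $(n,n,n)$; explicitly $U = Z_n\,\mathrm{CZ}_{2,n}\mathrm{CZ}_{3,n}\mathrm{CZ}_{4,n}\,\mathrm{CCZ}_{2,3,4}\mathrm{CCZ}_{2,3,n}\mathrm{CCZ}_{2,n,4}\mathrm{CCZ}_{n,3,4}$. Then $U$ preserves the code space and acts on it as the logical $\mathrm{CCZ}$ gate on encoded qubits $1,2,3$: $|\bar x\rangle\mapsto(-1)^{x_1x_2x_3}|\bar x\rangle$.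
   Context: For even $n$, the $[\![n,n-2,2]\!]$ code is the stabilizer code on $n$ qubits with stabilizer generators $X^{\otimes n}$ and $Z^{\otimes n}$, with logical operators $\bar X_j = X_1X_{j+1}$ and $\bar Z_j = Z_{j+1}Z_n$ for $j=1,\dots,n-2$. $|\bar x\rangle$ is the code state with $\bar Z_j|\bar x\rangle = (-1)^{x_j}|\bar x\rangle$. $\mathrm{CZ}=\mathbb 1-2|11\rangle\langle 11|$, $\mathrm{CCZ} = \mathbb 1 - 2|111\rangle\langle111|$. *)

(* Defs.v *)
(* Qubits are numbered 1..n as in the paper; qubit k is the ordinal k-1. *)
From HB Require Import structures.
From mathcomp Require Import all_boot all_order all_algebra all_field.
Set Implicit Arguments. Unset Strict Implicit. Unset Printing Implicit Defensive.
Import GRing.Theory Num.Theory.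
Local Open Scope ring_scope.

Definition sgn (c : bool) : algC := if c then -1 else 1.

Definition basis n := {ffun 'I_n -> bool}.
Definition state n := {ffun basis n -> algC}.

Definition bitq n (b : basis n) (k : nat) : bool :=
  [exists i : 'I_n, (i.+1 == k)%N && b i].

Definition scal n (c : algC) (psi : state n) : state n := [ffun b => c * psi b].

Definition diag n (f : basis n -> bool) (psi : state n) : state n :=
  [ffun b => sgn (f b) * psi b].

Definition Zg n (k : nat) := @diag n (fun b => bitq b k).
Definition CZg n (k l : nat) := @diag n (fun b => bitq b k && bitq b l).
Definition CCZg n (k l m : nat) :=
  @diag n (fun b => [&& bitq b k, bitq b l & bitq b m]).

Definition Xall n (psi : state n) : state n := [ffun b : basis n => psi [ffun i => ~~ b i]].
Definition Zall n := @diag n (fun b : basis n => odd (\sum_(i < n) (b i : nat))%N).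

Definition Zbar n (j : nat) := @diag n (fun b => bitq b j.+1 (+) bitq b n).

Definition codeSpace n (psi : state n) : Prop := Xall psi = psi /\ Zall psi = psi.

(* psi is (a multiple of) the code state |x_bar>, x = (x_1,...,x_{n-2}) *)
Definition logicalState n (x : nat -> bool) (psi : state n) : Prop :=
  codeSpace psi /\
  forall j, (1 <= j <= n - 2)%N -> @Zbar n j psi = scal (sgn (x j)) psi.

Definition Ugate n (psi : state n) : state n :=
  @Zg n n (@CZg n 2 n (@CZg n 3 n (@CZg n 4 n
    (@CCZg n 2 3 4 (@CCZg n 2 3 n (@CCZg n 2 n 4 (@CCZg n n 3 4 psi))))))).

(* Main.v *)
Require Import Defs.
From HB Require Import structures.
From mathcomp Require Import all_boot all_order all_algebra all_field.
Import GRing.Theory Num.Theory.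
Local Open Scope ring_scope.

Lemma sgn_mul (a c : bool) : sgn a * sgn c = sgn (a (+) c).
Proof. by case: a; case: c; rewrite /sgn ?mulr1 ?mul1r ?mulrNN ?mulr1. Qed.

Lemma sgn_inj (a c : bool) : sgn a = sgn c -> a = c.
Proof.
have h : (-1 : algC) != 1.
  apply/eqP => H; have : (1 + 1 : algC) == 0 by rewrite -{1}H addNr.
  by rewrite -[1 + 1]/(2%:R) pnatr_eq0.
case: a; case: c => //= H.
  by move: h; rewrite /sgn in H; rewrite H eqxx.
by move: h; rewrite /sgn in H; rewrite -H eqxx.
Qed.

Lemma diag_diag n (f g : basis n -> bool) psi :
  diag f (diag g psi) = diag (fun b => f b (+) g b) psi.
Proof. by apply/ffunP => b; rewrite !ffunE mulrA sgn_mul. Qed.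

Lemma bitq_flip n (b : basis n) k : (1 <= k <= n)%N ->
  bitq [ffun i => ~~ b i] k = ~~ bitq b k.
Proof.
move=> /andP[k1 kn].
have kk : (k.-1 < n)%N by rewrite (leq_trans _ kn) // ltn_predL.
have E : forall c : basis n, bitq c k = c (Ordinal kk).
  move=> c; rewrite /bitq; apply/existsP/idP.
    case=> i /andP[/eqP ei ci]; suff -> : Ordinal kk = i by [].
    by apply/val_inj => /=; rewrite -ei.
  by move=> ci; eexists; apply/andP; split; [|exact ci]; rewrite /= prednK.
by rewrite !E ffunE.
Qed.

Definition Fb n (b : basis n) : bool :=
  let a := bitq b 2 in let c := bitq b 3 in let d := bitq b 4 in let e := bitq b n in
  e (+) ((a && e) (+) ((c && e) (+) ((d && e) (+) ([&& a, c & d] (+)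
  ([&& a, c & e] (+) ([&& a, e & d] (+) [&& e, c & d])))))).

Lemma Ugate_diag n (psi : state n) : Ugate psi = diag (@Fb n) psi.
Proof.
rewrite /Ugate /Zg /CZg /CCZg !diag_diag; apply/ffunP => b; rewrite !ffunE /Fb.
by case: (bitq b 2); case: (bitq b 3); case: (bitq b 4); case: (bitq b n).
Qed.

Theorem mainTheorem6 (n : nat) (hn : (6 <= n)%N) (heven : ~~ odd n) :
  (forall psi : state n, codeSpace psi -> codeSpace (Ugate psi)) /\
  (forall (x : nat -> bool) (psi : state n), logicalState x psi ->
     Ugate psi = scal (sgn [&& x 1%N, x 2%N & x 3%N]) psi).
Proof.
split.
  move=> psi [HX HZ]; rewrite Ugate_diag; split.
    apply/ffunP => b; rewrite !ffunE -{2}HX ffunE.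
    congr (sgn _ * _); rewrite /Fb !bitq_flip //;
      try (apply/andP; split => //; apply: leq_trans hn => //).
    by case: (bitq b 2); case: (bitq b 3); case: (bitq b 4); case: (bitq b n).
  by apply/ffunP => b; rewrite -{2}HZ !ffunE mulrCA.
move=> x psi [_ HL].
rewrite Ugate_diag; apply/ffunP => b; rewrite !ffunE.
have [->|nz] := eqVneq (psi b) 0; first by rewrite !mulr0.
have key : forall j, (1 <= j <= 3)%N -> bitq b j.+1 (+) bitq b n = x j.
  move=> j /andP[j1 j3]; have := HL j.
  rewrite j1 /= (leq_trans j3) ?leq_subRL //; [|exact: ltnW|exact: ltn_trans hn].
  move=> /(_ isT) /ffunP /(_ b); rewrite !ffunE => /(mulIf nz); exact: sgn_inj.
congr (_ * _); congr sgn.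
rewrite -(key 1%N) // -(key 2%N) // -(key 3%N) // /Fb.
by case: (bitq b 2); case: (bitq b 3); case: (bitq b 4); case: (bitq b n).
Qed.
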